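(* Let $p\in\mathbb{N}$ and let $B_w$ be the weighted backward shift on $\ell^2$ with weights $w_k=\left(\frac{k+2}{k+1}\right)^{1/(2p)}$, $k\in\mathbb{N}$. Then $B_w$ is not $p$-frequently hypercyclic on $\ell^2$ (norm topology), but $B_w$ is $q$-frequently hypercyclic on $\ell^2$ for every $q\ge p+1$.
   Context: The weighted backward shift is $B_w(e_n)=w_ne_{n-1}$ for $n\ge1$, $e_0=0$. An operator $T$ on a separable topological vector space $X$ is $q$-frequently hypercyclic ($q\in\mathbb{N}$) if there is $x\in X$ such that for every nonempty open $U$ the set $\{n\in\mathbb{N}:T^nx\in U\}$ has positive $q$-lower density, where $q\text{-}\underline{\mathrm{dens}}(A)=\liminf_{N\to\infty}\frac{\mathrm{card}\{n\in A:n\le N^q\}}{N}$. *)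

(* Defs.v *)
From Stdlib Require Import Reals Lra Lia Classical ClassicalEpsilon.
Open Scope R_scope.

Definition seqR := nat -> R.

Definition in_l2 (x : seqR) : Prop :=
  exists l, infinite_sum (fun k => (x k)^2) l.

Definition l2dist_lt (x y : seqR) (r : R) : Prop :=
  exists l, infinite_sum (fun k => (x k - y k)^2) l /\ sqrt l < r.

(** Open subsets of l^2 (norm topology), as predicates on seqR
    (only their trace on l^2 matters). *)
Definition l2_open (U : seqR -> Prop) : Prop :=
  forall x, in_l2 x -> U x ->
    exists eps, 0 < eps /\ forall y, in_l2 y -> l2dist_lt x y eps -> U y.

Definition l2_nonempty (U : seqR -> Prop) : Prop :=
  exists x, in_l2 x /\ U x.

(** Weighted backward shift: B_w(e_n) = w_n e_{n-1}, B_w(e_0)=0,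
    i.e. (B_w x)_k = w_{k+1} x_{k+1}. *)
Definition Bshift (w : nat -> R) (x : seqR) : seqR :=
  fun k => w (S k) * x (S k).

Definition iterT (T : seqR -> seqR) (n : nat) (x : seqR) : seqR :=
  Nat.iter n T x.

Fixpoint count_upto (A : nat -> Prop) (M : nat) : nat :=
  match M with
  | O => if excluded_middle_informative (A O) then 1%nat else 0%nat
  | S m => (count_upto A m +
            if excluded_middle_informative (A (S m)) then 1%nat else 0%nat)%nat
  end.

(** q-lower density of A is positive:
    liminf_{N->oo} card{n in A : n <= N^q} / N > 0. *)
Definition q_lower_dens_pos (q : nat) (A : nat -> Prop) : Prop :=
  exists c, 0 < c /\ exists N0 : nat, forall N : nat, (N0 <= N)%nat -> (0 < N)%nat ->
    c <= INR (count_upto A (N ^ q)) / INR N.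

Definition q_freq_hypercyclic_l2 (q : nat) (T : seqR -> seqR) : Prop :=
  exists x, in_l2 x /\
    forall U, l2_open U -> l2_nonempty U ->
      q_lower_dens_pos q (fun n => U (iterT T n x)).

Definition weight (p : nat) (k : nat) : R :=
  Rpower ((INR k + 2) / (INR k + 1)) (1 / (2 * INR p)).

(* Main.v *)
Require Import Defs.
From Stdlib Require Import Reals Lra Lia Classical ClassicalEpsilon ZArith.
Open Scope R_scope.

Fixpoint fs (f : nat -> R) (n : nat) : R :=
  match n with O => 0 | S n => fs f n + f n end.

Lemma fs_ext f g n : (forall k, (k < n)%nat -> f k = g k) -> fs f n = fs g n.
Proof. induction n; simpl; intros; auto. rewrite IHn by (intros; apply H; lia). rewrite H by lia; auto. Qed.

Lemma fs_le f g n : (forall k, (k < n)%nat -> f k <= g k) -> fs f n <= fs g n.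
Proof. induction n; simpl; intros; [lra|]. assert (fs f n <= fs g n) by (apply IHn; intros; apply H; lia).
  assert (f n <= g n) by (apply H; lia). lra. Qed.

Lemma fs_nonneg f n : (forall k, 0 <= f k) -> 0 <= fs f n.
Proof. intros; induction n; simpl; [lra|]. specialize (H n); lra. Qed.

Lemma fs_const c n : fs (fun _ => c) n = INR n * c.
Proof. induction n; simpl fs; [simpl; lra|]. rewrite IHn, S_INR; lra. Qed.

Lemma fs_plus f g n : fs (fun k => f k + g k) n = fs f n + fs g n.
Proof. induction n; simpl; [lra|]. rewrite IHn; lra. Qed.

Lemma fs_scal c f n : fs (fun k => c * f k) n = c * fs f n.
Proof. induction n; simpl; [lra|]. rewrite IHn; lra. Qed.

Lemma fs_split f a b : fs f (a + b) = fs f a + fs (fun j => f (a + j)%nat) b.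
Proof. induction b; simpl. rewrite Nat.add_0_r; lra. rewrite Nat.add_succ_r; simpl; rewrite IHb; lra. Qed.

Lemma fs_mono f a b : (forall k, 0 <= f k) -> (a <= b)%nat -> fs f a <= fs f b.
Proof. intros. replace b with (a + (b - a))%nat by lia. rewrite fs_split.
  assert (0 <= fs (fun j => f (a+j)%nat) (b-a)) by (apply fs_nonneg; auto). lra. Qed.

Lemma fs_mul_split f n S : fs f (n * S) = fs (fun t => fs (fun k => f (t*S + k)%nat) S) n.
Proof. induction n; simpl; auto. rewrite Nat.add_comm, fs_split, IHn. auto. Qed.

Lemma sum_f_R0_fs f N : sum_f_R0 f N = fs f (S N).
Proof. induction N; simpl; [lra|]. rewrite IHN; simpl; auto. Qed.

Lemma fs_one_pt f n j : (j < n)%nat -> (forall k, k <> j -> f k = 0) -> fs f n = f j.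
Proof. induction n; intros; [lia|]. simpl. destruct (Nat.eq_dec j n).
  subst. rewrite (fs_ext _ (fun _ => 0)). rewrite fs_const; lra. intros; apply H0; lia.
  assert (E: fs f n = f j) by (apply IHn; [lia|auto]). rewrite E, (H0 n) by auto; lra. Qed.

Lemma sum_exists f B : (forall k, 0 <= f k) -> (forall n, fs f n <= B) ->
  exists l, infinite_sum f l /\ l <= B.
Proof.
  intros Hf HB.
  assert (Hg : Un_growing (sum_f_R0 f)).
  { intro n. rewrite !sum_f_R0_fs. simpl. specialize (Hf (S n)). simpl in Hf. lra. }
  assert (Hub : has_ub (sum_f_R0 f)).
  { exists B. intros x [i ->]. rewrite sum_f_R0_fs. apply HB. }
  destruct (growing_cv _ Hg Hub) as [l Hl].
  exists l. split. exact Hl.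
  apply Rle_cv_lim with (Un := sum_f_R0 f) (Vn := fun _ => B); auto.
  intros; rewrite sum_f_R0_fs; auto.
  intros e He; exists O; intros; unfold Rdist; rewrite Rminus_diag, Rabs_R0; auto.
Qed.

Lemma sum_partial_le f l n : (forall k, 0 <= f k) -> infinite_sum f l -> fs f n <= l.
Proof.
  intros Hf Hl. destruct n. simpl.
  - assert (0 <= fs f 1) by (apply fs_nonneg; auto).
    assert (fs f 1 <= l). { rewrite <- sum_f_R0_fs. apply growing_ineq; auto.
    intro m. rewrite !sum_f_R0_fs. simpl. specialize (Hf (S m)). simpl in Hf. lra. } lra.
  - rewrite <- sum_f_R0_fs. apply growing_ineq; auto.
    intro m. rewrite !sum_f_R0_fs. simpl. specialize (Hf (S m)). simpl in Hf. lra.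
Qed.

Lemma sum_le_bound f l B : (forall k, 0 <= f k) -> infinite_sum f l -> (forall n, fs f n <= B) -> l <= B.
Proof.
  intros Hf Hl HB. destruct (sum_exists f B Hf HB) as [l' [H1 H2]].
  rewrite (uniqueness_sum _ _ _ Hl H1); auto. Qed.

Definition Pr (p k n : nat) : R :=
  Rpower ((INR k + INR n + 2) / (INR k + 2)) (1 / (2 * INR p)).

Lemma Rpower_pos x y : 0 < Rpower x y.
Proof. unfold Rpower; apply exp_pos. Qed.

Lemma Pr_pos p k n : 0 < Pr p k n.
Proof. apply Rpower_pos. Qed.

Lemma ratio_pos k n : 0 < (INR k + INR n + 2) / (INR k + 2).
Proof. pose proof (pos_INR k); pose proof (pos_INR n). apply Rdiv_lt_0_compat; lra. Qed.

Lemma iter_formula p x n k :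
  iterT (Bshift (weight p)) n x k = Pr p k n * x (k + n)%nat.
Proof.
  revert k; induction n; intro k.
  - unfold iterT, Pr; simpl. rewrite Nat.add_0_r.
    replace ((INR k + 0 + 2) / (INR k + 2)) with 1.
    unfold Rpower; rewrite ln_1, Rmult_0_r, exp_0; lra.
    pose proof (pos_INR k); field; lra.
  - unfold iterT in *; simpl Nat.iter. unfold Bshift at 1. rewrite IHn.
    replace (S k + n)%nat with (k + S n)%nat by lia. rewrite <- Rmult_assoc. f_equal.
    unfold weight, Pr. rewrite Rpower_mult_distr.
    2:{ rewrite S_INR. pose proof (pos_INR k); apply Rdiv_lt_0_compat; lra. }
    2: apply ratio_pos.
    f_equal. rewrite !S_INR. pose proof (pos_INR k); pose proof (pos_INR n). field; lra.
Qed.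

Lemma Pr_split p k d n : Pr p k (d + n) = Pr p k d * Pr p (k + d) n.
Proof.
  unfold Pr. rewrite Rpower_mult_distr by apply ratio_pos. f_equal.
  rewrite !plus_INR. pose proof (pos_INR k); pose proof (pos_INR n); pose proof (pos_INR d).
  field; lra.
Qed.

Lemma Pr_sq p k n : (1 <= p)%nat -> Pr p k n ^ 2 = Rpower ((INR k + INR n + 2) / (INR k + 2)) (/ INR p).
Proof.
  intros Hp. unfold Pr. simpl. rewrite Rmult_1_r, <- Rpower_plus. f_equal.
  assert (0 < INR p) by (apply lt_0_INR; lia). field; lra.
Qed.

Lemma root_lower p R X : (1 <= p)%nat -> 0 < R -> R ^ p <= X -> R <= Rpower X (/ INR p).
Proof.
  intros Hp HR HX. assert (0 < INR p) by (apply lt_0_INR; lia).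
  assert (E: R = Rpower (R ^ p) (/ INR p)).
  { rewrite <- Rpower_pow by auto. rewrite Rpower_mult. rewrite Rinv_r by lra. rewrite Rpower_1; auto. }
  rewrite E at 1. apply Rle_Rpower_l. left; apply Rinv_0_lt_compat; auto.
  split; auto. apply pow_lt; auto.
Qed.

Lemma root_upper p R X : (1 <= p)%nat -> 0 < R -> 0 < X -> X <= R ^ p -> Rpower X (/ INR p) <= R.
Proof.
  intros Hp HR HX0 HX. assert (0 < INR p) by (apply lt_0_INR; lia).
  assert (E: R = Rpower (R ^ p) (/ INR p)).
  { rewrite <- Rpower_pow by auto. rewrite Rpower_mult. rewrite Rinv_r by lra. rewrite Rpower_1; auto. }
  rewrite E at 1. apply Rle_Rpower_l. left; apply Rinv_0_lt_compat; auto.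
  split; auto.
Qed.

Lemma nat_above X : exists n : nat, X < INR n.
Proof.
  destruct (archimed X) as [H _]. exists (Z.to_nat (up X)).
  destruct (Z.le_gt_cases 0 (up X)).
  - rewrite INR_IZR_INZ, Z2Nat.id by auto. lra.
  - apply IZR_lt in H0. pose proof (pos_INR (Z.to_nat (up X))). lra.
Qed.

Lemma abs_sq a : Rabs a ^ 2 = a ^ 2.
Proof. rewrite RPow_abs; apply Rabs_pos_eq, pow2_ge_0. Qed.

Lemma abs_le_sqrt a l : a ^ 2 <= l -> Rabs a <= sqrt l.
Proof.
  intros H. assert (0 <= l) by (pose proof (pow2_ge_0 a); lra).
  pose proof (sqrt_pos l). pose proof (sqrt_sqrt l H0).
  pose proof (Rabs_pos a). pose proof (abs_sq a).
  destruct (Rle_lt_dec (Rabs a) (sqrt l)); auto. nra.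
Qed.

Definition e0 : seqR := fun k => if Nat.eqb k 0 then 1 else 0.

Lemma fs_e0 n : fs (fun k => (e0 k)^2) n <= 1.
Proof.
  destruct n. simpl; lra. replace (S n) with (1 + n)%nat by lia. rewrite fs_split.
  rewrite (fs_ext (fun j => e0 (1 + j)%nat ^ 2) (fun _ => 0)). rewrite fs_const. simpl. unfold e0; simpl. lra.
  intros; unfold e0; simpl. lra.
Qed.

Lemma e0_l2 : in_l2 e0.
Proof. destruct (sum_exists (fun k => (e0 k)^2) 1) as [l [H _]]. intros; apply pow2_ge_0. apply fs_e0. exists l; auto. Qed.

Lemma l2dist_coord x y r k : l2dist_lt x y r -> Rabs (x k - y k) < r.
Proof.
  intros [l [Hl Hs]]. eapply Rle_lt_trans; [|apply Hs]. apply abs_le_sqrt.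
  eapply Rle_trans; [|apply (sum_partial_le (fun k => (x k - y k)^2) _ (S k)); auto].
  2: intros; apply pow2_ge_0.
  replace (S k) with (k + 1)%nat by lia. rewrite fs_split. cbn [fs].
  rewrite Nat.add_0_r. pose proof (fs_nonneg (fun k0 => (x k0 - y k0)^2) k (fun _ => pow2_ge_0 _)). lra.
Qed.

Definition U0 : seqR -> Prop := fun y => Rabs (y O - 1) < 1/2.

Lemma U0_open : l2_open U0.
Proof.
  intros y _ Hy. exists (1/2 - Rabs (y O - 1)). split. unfold U0 in Hy; lra.
  intros z _ Hd. apply (l2dist_coord _ _ _ O) in Hd. unfold U0 in *.
  pose proof (Rabs_triang (z O - y O) (y O - 1)). replace (z O - y O + (y O - 1)) with (z O - 1) in H by ring.
  rewrite Rabs_minus_sym in Hd. lra.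
Qed.

Lemma U0_ne : l2_nonempty U0.
Proof. exists e0; split. apply e0_l2. unfold U0, e0; simpl. rewrite Rminus_diag, Rabs_R0; lra. Qed.

Section Part1.
Variable A : nat -> Prop.
Variable x : seqR.

Fixpoint Sig (M : nat) : R :=
  match M with
  | O => if excluded_middle_informative (A O) then x O ^ 2 else 0
  | S m => Sig m + if excluded_middle_informative (A (S m)) then x (S m) ^ 2 else 0
  end.

Lemma Sig_le M : Sig M <= fs (fun k => x k ^ 2) (S M).
Proof.
  induction M; simpl.
  - destruct (excluded_middle_informative (A 0)); pose proof (pow2_ge_0 (x O)); lra.
  - simpl in IHM. destruct (excluded_middle_informative (A (S M))); pose proof (pow2_ge_0 (x (S M))); lra.
Qed.

Lemma Sig_diff a b beta : (a <= b)%nat -> 0 <= beta ->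
  (forall n, (a < n <= b)%nat -> A n -> beta <= x n ^ 2) ->
  Sig b - Sig a >= beta * (INR (count_upto A b) - INR (count_upto A a)).
Proof.
  intros Hab Hb H. induction b.
  - assert (a = O) by lia; subst. lra.
  - destruct (Nat.eq_dec a (S b)). subst; lra.
    assert (IH: Sig b - Sig a >= beta * (INR (count_upto A b) - INR (count_upto A a))).
    { apply IHb. lia. intros; apply H; auto; lia. }
    simpl. rewrite plus_INR.
    destruct (excluded_middle_informative (A (S b))).
    + assert (beta <= x (S b) ^ 2) by (apply H; auto; lia). simpl. lra.
    + simpl. lra.
Qed.

End Part1.

Lemma count_nonneg A M : 0 <= INR (count_upto A M).
Proof. apply pos_INR. Qed.

Theorem part1 p (hp : (1 <= p)%nat) : ~ q_freq_hypercyclic_l2 p (Bshift (weight p)).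
Proof.
  intros [x [[L HL] Hall]].
  destruct (Hall U0 U0_open U0_ne) as [c [Hc [N0 HN]]].
  set (A := fun n => U0 (iterT (Bshift (weight p)) n x)).
  fold A in HN.
  assert (HL0 : forall k, 0 <= x k ^ 2) by (intros; apply pow2_ge_0).
  assert (SL : forall M, Sig A x M <= L).
  { intro M. eapply Rle_trans. apply Sig_le. apply sum_partial_le; auto. }
  set (b := fun i => (2 ^ (i * p))%nat).
  set (ci := fun i => INR (count_upto A (b i))).
  set (Si := fun i => Sig A x (b i)).
  assert (Hlow : forall i n, (1 <= i)%nat -> (n <= b i)%nat -> A n -> / (4 * 2 ^ i) <= x n ^ 2).
  { intros i n Hi Hn HA. unfold A, U0 in HA. rewrite iter_formula in HA. simpl in HA.
    assert (HP: Pr p 0 n ^ 2 <= 2 ^ i).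
    { rewrite Pr_sq by auto. apply root_upper; auto. apply pow_lt; lra. apply ratio_pos.
      rewrite <- pow_mult. replace (i * p)%nat with (i * p)%nat by lia.
      assert (INR n <= 2 ^ (i * p)).
      { unfold b in Hn. apply le_INR in Hn. rewrite pow_INR in Hn. simpl in Hn. auto. }
      assert (2 <= 2 ^ (i * p)).
      { replace 2 with (2 ^ 1) at 1 by (simpl; lra). apply Rle_pow. lra. nia. }
      simpl. lra. }
    pose proof (Pr_pos p 0 n).
    assert (1/2 < Pr p 0 n * Rabs (x n)).
    { rewrite <- (Rabs_pos_eq (Pr p 0 n)) by lra. rewrite <- Rabs_mult.
      pose proof (Rabs_triang_inv 1 (Pr p 0 n * x n)). rewrite Rabs_minus_sym, Rabs_R1 in H0. lra. }
    assert (0 < 2 ^ i) by (apply pow_lt; lra).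
    pose proof (abs_sq (x n)).
    pose proof (Rabs_pos (x n)).
    apply Rmult_le_reg_l with (4 * 2 ^ i). lra. rewrite Rinv_r by lra. nra. }
  assert (Hd : forall i, (N0 <= 2 ^ i)%nat -> c * 2 ^ i <= ci i).
  { intros i Hi. assert (0 < 2 ^ i)%nat by (pose proof (Nat.pow_nonzero 2 i); lia).
    specialize (HN (2 ^ i)%nat Hi H). unfold ci, b. rewrite Nat.pow_mul_r.
    rewrite pow_INR in HN. simpl in HN.
    assert (0 < 2 ^ i) by (apply pow_lt; lra).
    apply Rmult_le_compat_r with (r := 2 ^ i) in HN; [|lra].
    unfold Rdiv in HN. rewrite Rmult_assoc, Rinv_l in HN by lra. lra. }
  set (T := fun i => 4 * Si i - ci i / 2 ^ i).
  assert (Hstep : forall i, T (S i) - T i >= ci i / 2 ^ (S i)).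
  { intro i. assert (0 < 2 ^ i) by (apply pow_lt; lra).
    assert (D: Si (S i) - Si i >= / (4 * 2 ^ (S i)) * (ci (S i) - ci i)).
    { unfold Si, ci. apply Sig_diff.
      unfold b. apply Nat.pow_le_mono_r; lia.
      left; apply Rinv_0_lt_compat. simpl; lra.
      intros n Hn HA. apply Hlow; auto. lia. lia. }
    unfold T. simpl pow in *. 
    assert (/ (4 * (2 * 2 ^ i)) * (ci (S i) - ci i) = (ci (S i) - ci i) / (4 * (2 * 2^i))) by (unfold Rdiv; ring).
    rewrite H0 in D.
    apply Rmult_ge_compat_l with (r := 4) in D; [|lra].
    replace (4 * ((ci (S i) - ci i) / (4 * (2 * 2 ^ i)))) with ((ci (S i) - ci i) / (2 * 2 ^ i)) in D by (field; lra).
    replace (ci i / (2 * 2 ^ i)) with (ci i / 2 ^ i - ci i / (2 * 2 ^ i)) by (field; lra).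
    unfold Rdiv in *. lra. }
  assert (HN0 : (N0 <= 2 ^ N0)%nat) by (apply Nat.lt_le_incl, Nat.pow_gt_lin_r; lia).
  assert (Hgrow : forall k, T (N0 + k)%nat >= T N0 + INR k * (c / 2)).
  { induction k. simpl. rewrite Nat.add_0_r; lra.
    rewrite S_INR. replace (N0 + S k)%nat with (S (N0 + k)) by lia.
    specialize (Hstep (N0 + k)%nat).
    assert (c * 2 ^ (N0 + k) <= ci (N0 + k)%nat).
    { apply Hd. eapply Nat.le_trans; [apply HN0|]. apply Nat.pow_le_mono_r; lia. }
    assert (0 < 2 ^ (N0 + k)) by (apply pow_lt; lra).
    assert (ci (N0 + k)%nat / 2 ^ S (N0 + k) >= c / 2).
    { simpl pow. apply Rle_ge. unfold Rdiv. apply Rmult_le_reg_l with (2 * 2 ^ (N0 + k)). lra.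
      field_simplify; try lra. }
    lra. }
  assert (HTup : forall i, T i <= 4 * L).
  { intro i. unfold T. assert (0 <= ci i / 2 ^ i).
    { unfold ci, Rdiv. apply Rmult_le_pos. apply pos_INR. left; apply Rinv_0_lt_compat, pow_lt; lra. }
    specialize (SL (b i)). unfold Si. lra. }
  destruct (nat_above ((4 * L - T N0) / (c / 2))) as [k Hk].
  specialize (Hgrow k). specialize (HTup (N0 + k)%nat).
  assert (INR k * (c / 2) > 4 * L - T N0).
  { apply Rmult_lt_reg_r with (/ (c/2)).
    apply Rinv_0_lt_compat; lra. rewrite Rmult_assoc, Rinv_r by lra. lra. }
  lra.
Qed.

Section Blocks.
Set Default Proof Using "All".
Variable p : nat.
Hypothesis hp : (1 <= p)%nat.

Definition cc : nat := (p * (p + 1))%nat.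
Definition nb (i : nat) : nat := (4 ^ (p * i))%nat.
Definition sp (i : nat) : nat := (4 ^ (p * p * i))%nat.
Definition st (i : nat) : nat := (4 ^ (cc * i))%nat.
Definition bpos (i t : nat) : nat := (st i + t * sp i)%nat.
Definition blk (n : nat) : nat := (Nat.log2 n / (2 * cc))%nat.

Lemma cc_ge2 : (2 <= cc)%nat.
Proof. unfold cc; nia. Qed.

Lemma pow4 e : (4 ^ e = 2 ^ (2 * e))%nat.
Proof. rewrite Nat.pow_mul_r. reflexivity. Qed.

Lemma st_eq i : st i = (nb i * sp i)%nat.
Proof. unfold st, nb, sp, cc. rewrite <- Nat.pow_add_r. f_equal. nia. Qed.

Lemma nb_pos i : (1 <= nb i)%nat.
Proof. unfold nb. pose proof (Nat.pow_nonzero 4 (p*i)). lia. Qed.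
Lemma sp_pos i : (1 <= sp i)%nat.
Proof. unfold sp. pose proof (Nat.pow_nonzero 4 (p*p*i)). lia. Qed.
Lemma st_pos i : (1 <= st i)%nat.
Proof. unfold st. pose proof (Nat.pow_nonzero 4 (cc*i)). lia. Qed.

Lemma st_S i : st (S i) = (st i * 4 ^ cc)%nat.
Proof. unfold st. rewrite <- Nat.pow_add_r. f_equal. lia. Qed.

Lemma st_grow i : (16 * st i <= st (S i))%nat.
Proof. rewrite st_S. assert (16 <= 4 ^ cc)%nat.
  { replace 16%nat with (4^2)%nat by reflexivity. apply Nat.pow_le_mono_r; [lia|apply cc_ge2]. }
  nia. Qed.

Lemma st_mono i j : (i <= j)%nat -> (st i <= st j)%nat.
Proof. intros; unfold st; apply Nat.pow_le_mono_r; [lia|nia]. Qed.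

Lemma st_grow2 i j : (i < j)%nat -> (16 * st i <= st j)%nat.
Proof. intros. pose proof (st_grow i). pose proof (st_mono (S i) j). lia. Qed.

Lemma div_between L c i : (0 < c)%nat -> (c * i <= L)%nat -> (L < c * S i)%nat -> (L / c = i)%nat.
Proof. intros. symmetry. apply Nat.div_unique with (L - c * i)%nat. rewrite Nat.mul_succ_r in H1. lia. lia. Qed.

Lemma blk_char n i : (st i <= n)%nat -> (n < st (S i))%nat -> blk n = i.
Proof.
  intros H1 H2. pose proof (st_pos i). unfold blk. apply div_between. pose proof cc_ge2; lia.
  - apply Nat.log2_le_pow2. lia. unfold st in H1. rewrite pow4 in H1. replace (2 * cc * i)%nat with (2 * (cc * i))%nat by lia. auto.
  - apply Nat.log2_lt_pow2. lia. unfold st in H2. rewrite pow4 in H2. replace (2 * cc * S i)%nat with (2 * (cc * S i))%nat by lia. auto.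
Qed.

Lemma blk_spec n : (1 <= n)%nat -> (st (blk n) <= n /\ n < st (S (blk n)))%nat.
Proof.
  intros Hn. pose proof (Nat.log2_spec n Hn) as [H1 H2].
  assert (Hc: (2 * cc <> 0)%nat) by (pose proof cc_ge2; lia).
  pose proof (Nat.Div0.mul_div_le (Nat.log2 n) (2 * cc)).
  pose proof (Nat.div_mod_eq (Nat.log2 n) (2 * cc)). pose proof (Nat.mod_upper_bound (Nat.log2 n) (2*cc) Hc).
  unfold blk, st. rewrite !pow4. split.
  - eapply Nat.le_trans; [|apply H1]. apply Nat.pow_le_mono_r; lia.
  - eapply Nat.lt_le_trans; [apply H2|]. apply Nat.pow_le_mono_r. lia.
    set (L := Nat.log2 n) in *. set (q := (L / (2 * cc))%nat) in *. nia.
Qed.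

Lemma blk_mono a b : (a <= b)%nat -> (blk a <= blk b)%nat.
Proof. intros. unfold blk. apply Nat.Div0.div_le_mono. apply Nat.log2_le_mono; auto. Qed.

Lemma pos_lt_next i t : (t < nb i)%nat -> (bpos i t + sp i <= 2 * st i)%nat.
Proof. intros. unfold bpos. rewrite (st_eq i). nia. Qed.

Lemma dec_pos i t k : (t < nb i)%nat -> (k < sp i)%nat ->
  blk (bpos i t + k) = i /\ ((bpos i t + k - st i) / sp i = t)%nat /\ ((bpos i t + k - st i) mod sp i = k)%nat.
Proof.
  intros Ht Hk. pose proof (pos_lt_next i t Ht). pose proof (st_grow i). pose proof (sp_pos i).
  split; [apply blk_char; unfold bpos in *; lia|].
  replace (bpos i t + k - st i)%nat with (k + t * sp i)%nat by (unfold bpos; lia).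
  split. rewrite Nat.div_add by lia. rewrite Nat.div_small by lia. lia.
  rewrite Nat.Div0.mod_add by lia. apply Nat.mod_small; lia.
Qed.

Fixpoint nu_f (f s : nat) : nat :=
  match f with O => O | S f => if Nat.odd s then O else S (nu_f f (Nat.div2 s)) end.
Definition nu (s : nat) : nat := nu_f s s.
Definition oddp (s : nat) : nat := (s / 2 ^ nu s / 2)%nat.

Lemma nu_f_eq m u f : (m < f)%nat -> nu_f f (2 ^ m * (2 * u + 1)) = m.
Proof.
  revert f; induction m; intros f Hf; destruct f; try lia; simpl.
  - replace (u + (u + 0) + 1 + 0)%nat with (S (2 * u)) by lia. rewrite Nat.odd_succ, Nat.even_mul. reflexivity.
  - replace (2 ^ m + (2 ^ m + 0))%nat with (2 * 2 ^ m)%nat by lia. rewrite <- Nat.mul_assoc.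
    rewrite Nat.odd_mul. change (Nat.odd 2) with false. simpl andb. rewrite Nat.div2_double. f_equal. apply IHm; lia.
Qed.

Lemma nu_eq m u : nu (2 ^ m * (2 * u + 1)) = m.
Proof. unfold nu. apply nu_f_eq. assert (m < 2 ^ m)%nat by (apply Nat.pow_gt_lin_r; lia). nia. Qed.

Lemma oddp_eq m u : oddp (2 ^ m * (2 * u + 1)) = u.
Proof. unfold oddp. rewrite nu_eq. rewrite Nat.mul_comm, Nat.div_mul by (apply Nat.pow_nonzero; lia).
  replace (2 * u + 1)%nat with (1 + u * 2)%nat by lia. rewrite Nat.div_add by lia. simpl. lia. Qed.

Definition Bm (m : nat) : nat := (2 * m * m + 1)%nat.
Definition dig (m u k : nat) : nat := ((u / Bm m ^ k) mod Bm m)%nat.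

Lemma Bm_pos m : (1 <= Bm m)%nat.
Proof. unfold Bm; lia. Qed.

Lemma dig_le m u k : (dig m u k <= 2 * m * m)%nat.
Proof. unfold dig. pose proof (Nat.mod_upper_bound (u / Bm m ^ k) (Bm m)). unfold Bm in *. lia. Qed.

Lemma dig_period m u w k : (k < m)%nat -> dig m (u + Bm m ^ m * w) k = dig m u k.
Proof.
  intros Hk. unfold dig. set (B := Bm m). assert (HB: (B <> 0)%nat) by (unfold B, Bm; lia).
  replace (B ^ m)%nat with (B ^ k * B ^ (m - k))%nat by (rewrite <- Nat.pow_add_r; f_equal; lia).
  replace (u + B ^ k * B ^ (m - k) * w)%nat with (u + (B ^ (m - k) * w) * B ^ k)%nat by ring.
  rewrite Nat.div_add by (apply Nat.pow_nonzero; auto).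
  replace (m - k)%nat with (S (m - k - 1)) by lia. simpl.
  replace (u / B ^ k + B * B ^ (m - k - 1) * w)%nat with (u / B ^ k + (B ^ (m - k - 1) * w) * B)%nat by ring.
  apply Nat.Div0.mod_add; auto.
Qed.

Fixpoint enc (B : nat) (d : nat -> nat) (n : nat) : nat :=
  match n with O => O | S n => (d O + B * enc B (fun k => d (S k)) n)%nat end.

Lemma enc_dig m d n k : (forall j, (d j < Bm m)%nat) -> (k < n)%nat -> dig m (enc (Bm m) d n) k = d k.
Proof.
  unfold dig. set (B := Bm m). assert (HB: (B <> 0)%nat) by (unfold B, Bm; lia). intro Hd.
  revert d k Hd; induction n; intros d k Hd Hk; [lia|]. simpl enc. destruct k.
  - simpl pow. rewrite Nat.div_1_r. replace (d O + B * enc B (fun k => d (S k)) n)%nat with (d O + enc B (fun k => d (S k)) n * B)%nat by ring.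
    rewrite Nat.Div0.mod_add by auto. apply Nat.mod_small; auto.
  - rewrite Nat.pow_succ_r', <- Nat.Div0.div_div.
    replace (d O + B * enc B (fun k => d (S k)) n)%nat with (d O + enc B (fun k => d (S k)) n * B)%nat by ring.
    rewrite Nat.div_add by auto. rewrite (Nat.div_small (d O) B) by apply Hd. simpl.
    apply (IHn (fun k => d (S k))); auto. lia.
Qed.

End Blocks.

Section Targets.
Set Default Proof Using "All".
Variable p : nat.
Hypothesis hp : (1 <= p)%nat.

Definition dec (m u : nat) : seqR :=
  fun k => if (k <? m)%nat then (INR (dig m u k) - INR (m * m)) / INR m else 0.

Definition allowed (i t : nat) : bool := andb (1 <=? nu (S t))%nat (8 * nu (S t) <=? i)%nat.
Definition sz (i t : nat) : nat := if allowed i t then nu (S t) else O.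
Definition tgt (i t : nat) : seqR := if allowed i t then dec (nu (S t)) (oddp (S t)) else fun _ => 0.

Definition hG (G : nat -> nat -> nat -> R) (J : nat) : R :=
  if (J =? 0)%nat then 0 else
  let i := blk p J in let r := (J - st p i)%nat in
  if ((r / sp p i) <? nb p i)%nat then G i (r / sp p i)%nat (r mod sp p i)%nat else 0.

Definition BS (G : nat -> nat -> nat -> R) (b : nat) : R :=
  fs (fun t => fs (fun k => G b t k) (sp p b)) (nb p b).

Lemma hG_pos G i t k : (t < nb p i)%nat -> (k < sp p i)%nat -> hG G (bpos p i t + k) = G i t k.
Proof.
  intros Ht Hk. destruct (dec_pos p hp i t k Ht Hk) as [E1 [E2 E3]].
  unfold hG. pose proof (st_pos p hp i). unfold bpos in *.
  destruct (Nat.eqb_spec (st p i + t * sp p i + k) 0); [lia|].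
  rewrite E1, E2, E3. destruct (Nat.ltb_spec t (nb p i)); [auto|lia].
Qed.

Lemma block_sum G I : fs (hG G) (st p I) = fs (BS G) I.
Proof.
  induction I.
  - unfold st. rewrite Nat.mul_0_r. simpl. unfold hG. simpl. lra.
  - assert (Hle : (st p I <= st p (S I))%nat) by (pose proof (st_grow p hp I); lia).
    replace (st p (S I)) with (st p I + (st p (S I) - st p I))%nat by lia.
    rewrite fs_split, IHI. simpl fs. f_equal.
    assert (Hnb : (nb p I * sp p I <= st p (S I) - st p I)%nat).
    { rewrite <- (st_eq p hp). pose proof (st_grow p hp I). lia. }
    replace (st p (S I) - st p I)%nat with (nb p I * sp p I + (st p (S I) - st p I - nb p I * sp p I))%nat by lia.
    rewrite fs_split. rewrite fs_mul_split.
    rewrite (fs_ext (fun j => hG G (st p I + (nb p I * sp p I + j))%nat) (fun _ => 0)).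
    2:{ intros j Hj. unfold hG. pose proof (st_pos p hp I).
        destruct (Nat.eqb_spec (st p I + (nb p I * sp p I + j)) 0); [lia|].
        rewrite (blk_char p hp _ I) by lia.
        replace (st p I + (nb p I * sp p I + j) - st p I)%nat with (j + nb p I * sp p I)%nat by lia.
        pose proof (sp_pos p hp I).
        rewrite Nat.div_add by lia.
        destruct (Nat.ltb_spec (j / sp p I + nb p I) (nb p I)); [lia|auto]. }
    rewrite fs_const, Rmult_0_r, Rplus_0_r. unfold BS.
    apply fs_ext. intros t Ht. apply fs_ext. intros k Hk.
    rewrite <- (hG_pos G I t k); auto. f_equal. unfold bpos. lia.
Qed.
End Targets.

Lemma INR4 e : INR (4 ^ e) = 4 ^ e.
Proof. rewrite pow_INR. f_equal. simpl. lra. Qed.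
Lemma INR2 e : INR (2 ^ e) = 2 ^ e.
Proof. rewrite pow_INR. f_equal. Qed.

Lemma RPow_abs_sq a : Rabs a ^ 2 = a ^ 2.
Proof. rewrite RPow_abs; apply Rabs_pos_eq, pow2_ge_0. Qed.

Lemma cube_le m : (m ^ 3 <= 4 ^ m)%nat.
Proof.
  induction m. simpl; lia.
  destruct (Nat.le_gt_cases m 2).
  - destruct m as [|[|[|]]]; simpl; lia.
  - rewrite (Nat.pow_succ_r' 4 m). assert ((S m) ^ 3 <= 4 * m ^ 3)%nat.
    { rewrite !Nat.pow_succ_r', !Nat.pow_0_r. assert (m * m >= 3 * m)%nat by nia. assert (m * (m * m) >= 3 * (m * m))%nat by nia. nia. }
    lia.
Qed.

Lemma fs_ind m b N : 0 <= b -> fs (fun k => if (k <? m)%nat then b else 0) N <= INR m * b.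
Proof.
  intros Hb. assert (forall N, fs (fun k => if (k <? m)%nat then b else 0) N = INR (Nat.min N m) * b).
  { clear N. intro n; induction n; simpl fs. simpl; lra. rewrite IHn.
    destruct (Nat.ltb_spec n m).
    - replace (Nat.min (S n) m) with (S (Nat.min n m)) by lia. rewrite S_INR. lra.
    - replace (Nat.min (S n) m) with (Nat.min n m) by lia. lra. }
  rewrite H. apply Rmult_le_compat_r; auto. apply le_INR; lia.
Qed.

Lemma fs_supp f m b N : 0 <= b -> (forall k, (m <= k)%nat -> f k <= 0) -> (forall k, (k < m)%nat -> f k <= b) ->
  fs f N <= INR m * b.
Proof.
  intros Hb H1 H2. eapply Rle_trans; [|apply (fs_ind m b N Hb)]. apply fs_le. intros k _.
  destruct (Nat.ltb_spec k m); auto.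
Qed.

Section Bounds.
Set Default Proof Using "All".
Variable p : nat.
Hypothesis hp : (1 <= p)%nat.

Lemma dec_abs m u k : (1 <= m)%nat -> Rabs (dec m u k) <= INR m.
Proof.
  intros Hm. unfold dec. destruct (Nat.ltb_spec k m).
  - pose proof (dig_le p hp m u k). apply le_INR in H0. rewrite !mult_INR in H0. rewrite mult_INR.
    assert (0 < INR m) by (apply lt_0_INR; lia). pose proof (pos_INR (dig m u k)).
    apply Rabs_le. split.
    + apply Rmult_le_reg_r with (INR m); auto. unfold Rdiv; rewrite Rmult_assoc, Rinv_l by lra. simpl in H0. nra.
    + apply Rmult_le_reg_r with (INR m); auto. unfold Rdiv; rewrite Rmult_assoc, Rinv_l by lra. simpl in H0. nra.
  - rewrite Rabs_R0. apply pos_INR.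
Qed.

Lemma tgt_zero i t k : (sz i t <= k)%nat -> tgt i t k = 0.
Proof. unfold sz, tgt. destruct (allowed i t); auto. unfold dec. intros. destruct (Nat.ltb_spec k (nu (S t))); auto; lia. Qed.

Lemma tgt_abs i t k : Rabs (tgt i t k) <= INR (sz i t).
Proof. unfold sz, tgt, allowed.
  destruct (1 <=? nu (S t))%nat eqn:E1; destruct (8 * nu (S t) <=? i)%nat eqn:E2; simpl;
  try (rewrite Rabs_R0; simpl; lra).
  apply dec_abs. apply Nat.leb_le; auto. Qed.

Lemma sz_cap i t : (8 * sz i t <= i)%nat.
Proof. unfold sz, allowed.
  destruct (1 <=? nu (S t))%nat eqn:E1; destruct (8 * nu (S t) <=? i)%nat eqn:E2; simpl; try lia.
  apply Nat.leb_le; auto. Qed.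

Lemma tgt_sq i t k : (tgt i t k) ^ 2 <= INR (sz i t) ^ 2.
Proof. pose proof (tgt_abs i t k). rewrite <- (RPow_abs_sq (tgt i t k)). pose proof (Rabs_pos (tgt i t k)). nra. Qed.
End Bounds.

Lemma geom_sum N : fs (fun i => / 2 ^ i) N = 2 - 2 * / 2 ^ N.
Proof. induction N; simpl fs. simpl; lra. rewrite IHN. simpl pow.
  assert (0 < 2 ^ N) by (apply pow_lt; lra). rewrite Rinv_mult. field. lra. Qed.

Lemma geom_le N : fs (fun i => / 2 ^ i) N <= 2.
Proof. rewrite geom_sum. assert (0 < / 2 ^ N) by (apply Rinv_0_lt_compat, pow_lt; lra). lra. Qed.

Lemma pow_4_2 m : (4:R) ^ m * 4 ^ m = 2 ^ (4 * m).
Proof. rewrite <- pow_add. replace (4 * m)%nat with (2 * (m + m))%nat by lia. rewrite pow_mult. f_equal. lra. Qed.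

Lemma cube_R m : INR m ^ 3 <= 4 ^ m.
Proof. pose proof (cube_le m). apply le_INR in H. rewrite pow_INR, INR4 in H. auto. Qed.

Lemma m_pow_bound m e : (4 * m <= e)%nat -> INR m ^ 3 * 4 ^ m <= 2 ^ e.
Proof. intros. pose proof (cube_R m). assert (0 < 4 ^ m) by (apply pow_lt; lra).
  apply Rle_trans with (4 ^ m * 4 ^ m). nra. rewrite pow_4_2. apply Rle_pow; [lra|auto]. Qed.

Lemma INR_le_4pow m : INR m + 1 <= 4 ^ m.
Proof. induction m. simpl; lra. rewrite S_INR. simpl pow. assert (1 <= 4 ^ m) by (apply pow_R1_Rle; lra). lra. Qed.

Section XL2.
Set Default Proof Using "All".
Variable p : nat.
Hypothesis hp : (1 <= p)%nat.

Lemma Pr_lower k d R : 0 < R -> (INR k + 2) * R ^ p <= INR d -> R <= Pr p k d ^ 2.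
Proof.
  intros HR H. rewrite Pr_sq by auto. apply root_lower; auto.
  pose proof (pos_INR k). apply Rmult_le_reg_l with (INR k + 2). lra.
  unfold Rdiv. rewrite (Rmult_comm ((INR k + INR d + 2))), <- Rmult_assoc, Rinv_r by lra. lra.
Qed.

Lemma pos_bound i t d R N : 0 < R -> (forall k, (k < sz i t)%nat -> R <= Pr p k d ^ 2) ->
  fs (fun k => tgt i t k ^ 2 / Pr p k d ^ 2) N <= INR (sz i t) ^ 3 / R.
Proof.
  intros HR H. replace (INR (sz i t) ^ 3 / R) with (INR (sz i t) * (INR (sz i t) ^ 2 / R)) by (field; lra).
  apply fs_supp.
  - apply Rmult_le_pos. apply pow2_ge_0. left; apply Rinv_0_lt_compat; auto.
  - intros k Hk. rewrite (tgt_zero p hp i t k Hk). unfold Rdiv. simpl. rewrite !Rmult_0_l. lra.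
  - intros k Hk. specialize (H k Hk). pose proof (Pr_pos p k d). assert (0 < Pr p k d ^ 2) by (apply pow_lt; auto).
    pose proof (tgt_sq p hp i t k). unfold Rdiv. apply Rmult_le_compat; auto. apply pow2_ge_0.
    left; apply Rinv_0_lt_compat; auto. apply Rinv_le_contravar; auto.
Qed.

Lemma R_pow_helper k m A : (k < m)%nat -> 0 <= A ->
  (INR k + 2) * (A * / 4 ^ m) ^ p <= A ^ p.
Proof.
  intros Hk HA. rewrite Rpow_mult_distr, pow_inv, <- pow_mult.
  assert (INR k + 2 <= 4 ^ m).
  { pose proof (INR_le_4pow m). assert (H1: (S k <= m)%nat) by lia. apply le_INR in H1. rewrite S_INR in H1. lra. }
  assert (4 ^ m <= 4 ^ (m * p)) by (apply Rle_pow; [lra|nia]).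
  assert (0 < 4 ^ (m * p)) by (apply pow_lt; lra). assert (0 <= A ^ p) by (apply pow_le; auto).
  rewrite <- Rmult_assoc, Rmult_comm, <- Rmult_assoc.
  rewrite <- (Rmult_1_l (A ^ p)) at 2. apply Rmult_le_compat_r; auto.
  apply Rmult_le_reg_r with (4 ^ (m * p)); auto.
  replace (/ 4 ^ (m * p) * (INR k + 2) * 4 ^ (m * p)) with (INR k + 2) by (field; lra). lra.
Qed.

Definition xv : seqR := hG p (fun i t k => tgt i t k / Pr p k (bpos p i t)).
Definition Gx (i t k : nat) : R := tgt i t k ^ 2 / Pr p k (bpos p i t) ^ 2.

Lemma xv_sq J : xv J ^ 2 = hG p Gx J.
Proof. unfold xv, hG, Gx. destruct (J =? 0)%nat. simpl; lra.
  destruct (_ <? _)%nat. unfold Rdiv. rewrite Rpow_mult_distr, pow_inv. auto. simpl; lra. Qed.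

Lemma Gx_nonneg i t k : 0 <= Gx i t k.
Proof. unfold Gx. apply Rmult_le_pos. apply pow2_ge_0. left; apply Rinv_0_lt_compat, pow_lt, Pr_pos. Qed.

Lemma BS_Gx i : BS p Gx i <= / 2 ^ i.
Proof.
  unfold BS. set (m := fun t => sz i t).
  assert (Hpos : forall t, (t < nb p i)%nat -> fs (fun k => Gx i t k) (sp p i) <= 2 ^ i * / 4 ^ ((p + 1) * i)).
  { intros t Ht. unfold Gx.
    assert (HR : 0 < 4 ^ ((p + 1) * i) * / 4 ^ (sz i t)).
    { apply Rmult_lt_0_compat. apply pow_lt; lra. apply Rinv_0_lt_compat, pow_lt; lra. }
    eapply Rle_trans. apply (pos_bound i t (bpos p i t) _ (sp p i) HR).
    - intros k Hk. apply Pr_lower; auto. eapply Rle_trans. apply R_pow_helper; auto. left; apply pow_lt; lra.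
      rewrite <- pow_mult. unfold bpos. rewrite plus_INR, mult_INR. unfold st, cc. rewrite INR4.
      replace ((p + 1) * i * p)%nat with (p * (p + 1) * i)%nat by lia.
      pose proof (pos_INR t); pose proof (pos_INR (sp p i)). nra.
    - assert (0 < 4 ^ ((p + 1) * i)) by (apply pow_lt; lra). assert (0 < 4 ^ sz i t) by (apply pow_lt; lra).
      replace (INR (sz i t) ^ 3 / (4 ^ ((p + 1) * i) * / 4 ^ sz i t)) with
        (INR (sz i t) ^ 3 * 4 ^ sz i t * / 4 ^ ((p + 1) * i)) by (field; lra).
      apply Rmult_le_compat_r. left; apply Rinv_0_lt_compat; auto.
      apply m_pow_bound. pose proof (sz_cap p hp i t). lia. }
  eapply Rle_trans. apply fs_le. intros t Ht. apply (Hpos t Ht).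
  rewrite fs_const. unfold nb. rewrite INR4.
  replace ((p + 1) * i)%nat with (p * i + i)%nat by lia. rewrite pow_add.
  assert (0 < 4 ^ (p * i)) by (apply pow_lt; lra). assert (0 < 4 ^ i) by (apply pow_lt; lra).
  assert (0 < 2 ^ i) by (apply pow_lt; lra).
  replace (4 ^ i) with (2 ^ i * 2 ^ i) by (rewrite <- Rpow_mult_distr; f_equal; lra).
  right. field. lra.
Qed.

Lemma xv_partial N : fs (fun J => xv J ^ 2) N <= 2.
Proof.
  assert (HN : (N <= st p N)%nat).
  { unfold st. assert (N < 4 ^ N)%nat by (apply Nat.pow_gt_lin_r; lia).
    assert (4 ^ N <= 4 ^ (cc p * N))%nat by (apply Nat.pow_le_mono_r; [lia| pose proof (cc_ge2 p hp); nia]). lia. }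
  eapply Rle_trans. apply (fs_mono (fun J => xv J ^ 2) N (st p N)); auto. intros; apply pow2_ge_0.
  rewrite (fs_ext _ (hG p Gx)) by (intros; apply xv_sq).
  rewrite block_sum by auto. eapply Rle_trans; [|apply (geom_le N)]. apply fs_le. intros; apply BS_Gx.
Qed.

Lemma xv_l2 : in_l2 xv.
Proof. destruct (sum_exists (fun J => xv J ^ 2) 2) as [l [Hl _]]. intros; apply pow2_ge_0. apply xv_partial. exists l; auto. Qed.
End XL2.

Lemma fs_window t K a N : 0 <= a ->
  fs (fun u => if andb (t <? u)%nat (u <? t + 1 + K)%nat then a else 0) N <= INR K * a.
Proof.
  intros Ha. destruct (Nat.le_gt_cases N (t + 1)).
  - rewrite (fs_ext _ (fun _ => 0)). rewrite fs_const. pose proof (pos_INR K). nra.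
    intros u Hu. destruct (Nat.ltb_spec t u); simpl; auto; lia.
  - replace N with (t + 1 + (N - (t + 1)))%nat by lia. rewrite fs_split.
    rewrite (fs_ext (fun u => if andb (t <? u)%nat (u <? t + 1 + K)%nat then a else 0) (fun _ => 0)).
    rewrite fs_const. rewrite Rmult_0_r, Rplus_0_l.
    eapply Rle_trans; [|apply (fs_ind K a (N - (t+1)) Ha)]. right. apply fs_ext. intros j _.
    destruct (Nat.ltb_spec t (t + 1 + j)); [|lia]. simpl.
    destruct (Nat.ltb_spec (t + 1 + j) (t + 1 + K)); destruct (Nat.ltb_spec j K); auto; lia.
    intros u Hu. destruct (Nat.ltb_spec t u); simpl; auto; lia.
Qed.

Lemma geom_tail i N : fs (fun j => if (i <? j)%nat then / 2 ^ j else 0) N <= / 2 ^ i.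
Proof.
  set (g := fun j => if (i <? j)%nat then / 2 ^ j else 0).
  assert (Hg: forall j, 0 <= g j). { intros; unfold g. destruct (_ <? _)%nat. left; apply Rinv_0_lt_compat, pow_lt; lra. lra. }
  eapply Rle_trans. apply (fs_mono g N (i + 1 + N)); auto; lia.
  rewrite fs_split. rewrite (fs_ext g (fun _ => 0)).
  2:{ intros; unfold g. destruct (Nat.ltb_spec i k); auto; lia. }
  rewrite fs_const, Rmult_0_r, Rplus_0_l.
  rewrite (fs_ext _ (fun j => / 2 ^ (i + 1) * / 2 ^ j)).
  2:{ intros; unfold g. destruct (Nat.ltb_spec i (i + 1 + k)); [|lia]. rewrite pow_add, Rinv_mult. auto. }
  rewrite fs_scal. pose proof (geom_le N). assert (0 < / 2 ^ (i + 1)) by (apply Rinv_0_lt_compat, pow_lt; lra).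
  rewrite pow_add, Rinv_mult. simpl pow. assert (0 < / 2 ^ i) by (apply Rinv_0_lt_compat, pow_lt; lra).
  rewrite Rmult_1_r. replace (/ 2 ^ i * / 2 * fs (fun i0 => / 2 ^ i0) N) with (/ 2 ^ i * (/2 * fs (fun i0 => / 2 ^ i0) N)) by ring.
  rewrite <- (Rmult_1_r (/ 2 ^ i)) at 2. apply Rmult_le_compat_l; lra.
Qed.

Section Err.
Set Default Proof Using "All".
Variable p : nat.
Hypothesis hp : (1 <= p)%nat.
Variables i t : nat.
Hypothesis ht : (t < nb p i)%nat.

Let n := bpos p i t.

Definition Fe (i' t' k : nat) : R :=
  if (n <? bpos p i' t')%nat then tgt i' t' k ^ 2 / Pr p k (bpos p i' t' - n) ^ 2 else 0.

Lemma Fe_nonneg i' t' k : 0 <= Fe i' t' k.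
Proof. unfold Fe. destruct (_ <? _)%nat; [|lra]. apply Rmult_le_pos. apply pow2_ge_0.
  left; apply Rinv_0_lt_compat, pow_lt, Pr_pos. Qed.

Lemma hG_nonneg G J : (forall a b c, 0 <= G a b c) -> 0 <= hG p G J.
Proof. intros. unfold hG. destruct (J =? 0)%nat; [lra|]. destruct (_ <? _)%nat; auto; lra. Qed.

Lemma sz_lt_sp i' t' : (sz i' t' < sp p i')%nat.
Proof. pose proof (sz_cap p hp i' t'). unfold sp. assert (i' < 4 ^ i')%nat by (apply Nat.pow_gt_lin_r; lia).
  assert (4 ^ i' <= 4 ^ (p * p * i'))%nat. { apply Nat.pow_le_mono_r; [lia|]. assert (1 <= p*p)%nat by nia. nia. } lia. Qed.

Lemma n_ge1 : (1 <= n)%nat.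
Proof. unfold n, bpos. pose proof (st_pos p hp i). lia. Qed.

Lemma err_pointwise j :
  (iterT (Bshift (weight p)) n (xv p) j - tgt i t j) ^ 2 <= hG p Fe (n + j).
Proof.
  rewrite iter_formula. pose proof (hG_nonneg Fe (n + j) Fe_nonneg) as Hnn.
  destruct (Nat.lt_ge_cases j (sz i t)) as [Hj | Hj].
  - unfold xv. replace (j + n)%nat with (bpos p i t + j)%nat by (unfold n; lia).
    rewrite hG_pos; auto. 2: pose proof (sz_lt_sp i t); lia.
    fold n. replace (Pr p j n * (tgt i t j / Pr p j n) - tgt i t j) with 0. simpl; lra.
    pose proof (Pr_pos p j n). field; lra.
  - rewrite (tgt_zero p hp i t j Hj), Rminus_0_r.
    set (J := (n + j)%nat). replace (j + n)%nat with J by (unfold J; lia).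
    assert (HJ1 : (1 <= J)%nat) by (pose proof n_ge1; unfold J; lia).
    destruct (blk_spec p hp J HJ1) as [Hs1 Hs2].
    set (i' := blk p J) in *. set (r := (J - st p i')%nat).
    set (t' := (r / sp p i')%nat). set (k := (r mod sp p i')%nat).
    assert (Hsp : (sp p i' <> 0)%nat) by (pose proof (sp_pos p hp i'); lia).
    assert (HJ : J = (bpos p i' t' + k)%nat).
    { unfold bpos, t', k. pose proof (Nat.div_mod_eq r (sp p i')). unfold r in *. nia. }
    assert (Hk : (k < sp p i')%nat) by (apply Nat.mod_upper_bound; auto).
    unfold xv. unfold hG at 1 2.
    destruct (Nat.eqb_spec J 0); [lia|]. fold i'. fold r. fold t'. fold k.
    destruct (Nat.ltb_spec t' (nb p i')) as [Ht' | Ht']; [| simpl; lra].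
    unfold Fe.
    assert (Hi : (i <= i')%nat).
    { unfold i'. replace i with (blk p n). apply blk_mono; unfold J; lia.
      destruct (dec_pos p hp i t 0 ht) as [E _]. pose proof (sp_pos p hp i); lia.
      rewrite Nat.add_0_r in E. auto. }
    destruct (Nat.ltb_spec n (bpos p i' t')) as [Hlt | Hge].
    + assert (Ek: (k + (bpos p i' t' - n))%nat = j) by (unfold J in HJ; lia).
      replace (bpos p i' t') with ((bpos p i' t' - n) + n)%nat at 1 by lia.
      rewrite Pr_split. rewrite Ek.
      pose proof (Pr_pos p k (bpos p i' t' - n)). pose proof (Pr_pos p j n).
      right. unfold Rdiv. field. lra.
    + destruct (Nat.eq_dec (bpos p i' t') n) as [Heq | Hne].
      * assert (Ei : i' = i).
        { destruct (dec_pos p hp i' t' 0 Ht') as [E1 _]. pose proof (sp_pos p hp i'); lia.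
          destruct (dec_pos p hp i t 0 ht) as [E2 _]. pose proof (sp_pos p hp i); lia.
          rewrite !Nat.add_0_r in *. fold n in E2. rewrite Heq in E1. congruence. }
        assert (Et : t' = t).
        { unfold n, bpos in Heq. rewrite Ei in Heq. pose proof (sp_pos p hp i). nia. }
        assert (Ek : k = j) by (unfold J in HJ; lia).
        rewrite Et, Ek. replace (tgt i' t j) with 0. unfold Rdiv; simpl; lra.
        rewrite Ei; symmetry; apply (tgt_zero p hp); auto.
      * exfalso. destruct (Nat.eq_dec i' i) as [Ei | Ei].
        -- clearbody i'. subst i'. unfold n, bpos in Hge, Hne, HJ. unfold J in HJ. unfold n, bpos in HJ.
           assert (t' < t)%nat by nia. assert (t' * sp p i + sp p i <= t * sp p i)%nat by nia. lia.
        -- assert (i < i')%nat by lia. pose proof (st_grow2 p hp i i' H).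
           pose proof (pos_lt_next p hp i t ht). assert (st p i' <= bpos p i' t')%nat by (unfold bpos; lia).
           fold n in H1. lia.
Qed.

Lemma Fe_pos_bound i' t' A N : (n < bpos p i' t')%nat -> 0 < A -> A ^ p <= INR (bpos p i' t' - n) ->
  fs (fun k => Fe i' t' k) N <= INR (sz i' t') ^ 3 * 4 ^ (sz i' t') / A.
Proof.
  intros Hlt HA HAd. unfold Fe. destruct (Nat.ltb_spec n (bpos p i' t')); [|lia].
  assert (HR : 0 < A * / 4 ^ sz i' t') by (apply Rmult_lt_0_compat; auto; apply Rinv_0_lt_compat, pow_lt; lra).
  eapply Rle_trans. apply (pos_bound p hp i' t' _ _ N HR).
  - intros k Hk. apply Pr_lower; auto. eapply Rle_trans; [|apply HAd]. apply R_pow_helper; auto. lra.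
  - right. assert (0 < 4 ^ sz i' t') by (apply pow_lt; lra). field. split; lra.
Qed.

Lemma Fe_zero i' t' k : (bpos p i' t' <= n)%nat -> Fe i' t' k = 0.
Proof. intros. unfold Fe. destruct (Nat.ltb_spec n (bpos p i' t')); auto; lia. Qed.

Lemma BS_Fe_before i' : (i' < i)%nat -> BS p Fe i' <= 0.
Proof.
  intros Hi. unfold BS. rewrite (fs_ext _ (fun _ => 0)). rewrite fs_const; lra.
  intros t' Ht'. rewrite (fs_ext _ (fun _ => 0)). rewrite fs_const; lra.
  intros k _. apply Fe_zero. pose proof (pos_lt_next p hp i' t' Ht'). pose proof (st_grow2 p hp i' i Hi).
  assert (st p i <= n)%nat by (unfold n, bpos; lia). pose proof (sp_pos p hp i'). lia.
Qed.

Lemma BS_Fe_after i' : (i < i')%nat -> BS p Fe i' <= 2 / 2 ^ i'.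
Proof.
  intros Hi. unfold BS.
  assert (Hpos : forall t', (t' < nb p i')%nat ->
    fs (fun k => Fe i' t' k) (sp p i') <= 2 * 2 ^ i' * / 4 ^ ((p + 1) * i')).
  { intros t' Ht'. assert (H: (n + sp p i <= 2 * st p i)%nat) by (apply pos_lt_next; auto). pose proof (st_grow2 p hp i i' Hi).
    assert (st p i' <= bpos p i' t')%nat by (unfold bpos; lia). pose proof (sp_pos p hp i).
    assert (HA : 0 < 4 ^ ((p + 1) * i') * / 2) by (apply Rmult_lt_0_compat; [apply pow_lt|]; lra).
    eapply Rle_trans. apply (Fe_pos_bound i' t' _ _ ltac:(lia) HA).
    - rewrite Rpow_mult_distr, pow_inv, <- pow_mult.
      assert (2 <= 2 ^ p) by (replace 2 with (2 ^ 1) at 1 by (simpl; lra); apply Rle_pow; [lra|lia]).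
      assert (HI: INR (st p i') <= 2 * INR (bpos p i' t' - n)).
      { replace 2 with (INR 2) at 1 by (simpl; lra). rewrite <- mult_INR. apply le_INR. lia. }
      unfold st, cc in HI. rewrite INR4 in HI. replace ((p + 1) * i' * p)%nat with (p * (p + 1) * i')%nat by lia.
      assert (0 < 4 ^ (p * (p + 1) * i')) by (apply pow_lt; lra).
      apply Rle_trans with (4 ^ (p * (p + 1) * i') * / 2).
      apply Rmult_le_compat_l. lra. apply Rinv_le_contravar; lra. lra.
    - assert (0 < 4 ^ ((p + 1) * i')) by (apply pow_lt; lra).
      replace (INR (sz i' t') ^ 3 * 4 ^ sz i' t' / (4 ^ ((p + 1) * i') * / 2))
        with (2 * (INR (sz i' t') ^ 3 * 4 ^ sz i' t') * / 4 ^ ((p + 1) * i')) by (field; lra).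
      apply Rmult_le_compat_r. left; apply Rinv_0_lt_compat; auto. apply Rmult_le_compat_l. lra.
      apply m_pow_bound. pose proof (sz_cap p hp i' t'). lia. }
  eapply Rle_trans. apply fs_le. intros t' Ht'. apply (Hpos t' Ht').
  rewrite fs_const. unfold nb. rewrite INR4.
  replace ((p + 1) * i')%nat with (p * i' + i')%nat by lia. rewrite pow_add.
  assert (0 < 4 ^ (p * i')) by (apply pow_lt; lra). assert (0 < 2 ^ i') by (apply pow_lt; lra).
  replace (4 ^ i') with (2 ^ i' * 2 ^ i') by (rewrite <- Rpow_mult_distr; f_equal; lra).
  right. field. lra.
Qed.

Lemma BS_Fe_same : BS p Fe i <= 2 * 2 ^ (i / 2) / 2 ^ i.
Proof.
  unfold BS. set (h := (i / 2)%nat). set (K := (2 ^ (p * i))%nat).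
  set (a := 2 ^ h * / 4 ^ (p * i)). set (b := 2 ^ h * / (4 ^ (p * i) * 2 ^ i)).
  assert (H4 : 0 < 4 ^ (p * i)) by (apply pow_lt; lra). assert (H2 : 0 < 2 ^ i) by (apply pow_lt; lra).
  assert (Hh : 0 < 2 ^ h) by (apply pow_lt; lra).
  assert (Ha : 0 <= a) by (unfold a; apply Rmult_le_pos; [lra|left; apply Rinv_0_lt_compat; auto]).
  assert (Hb : 0 <= b) by (unfold b; apply Rmult_le_pos; [lra|left; apply Rinv_0_lt_compat; apply Rmult_lt_0_compat; auto]).
  assert (Hpos : forall t', (t' < nb p i)%nat -> fs (fun k => Fe i t' k) (sp p i) <=
     (if andb (t <? t')%nat (t' <? t + 1 + K)%nat then a else 0) + b).
  { intros t' Ht'. destruct (Nat.le_gt_cases t' t).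
    - rewrite (fs_ext _ (fun _ => 0)). rewrite fs_const. destruct (andb _ _); lra.
      intros; apply Fe_zero. unfold n, bpos. nia.
    - assert (Hd : (bpos p i t' - n = (t' - t) * sp p i)%nat) by (unfold n, bpos; rewrite Nat.mul_sub_distr_r; nia).
      assert (Hlt : (n < bpos p i t')%nat) by (unfold n, bpos; pose proof (sp_pos p hp i); nia).
      assert (Hm : INR (sz i t') ^ 3 * 4 ^ sz i t' <= 2 ^ h) by (apply m_pow_bound; pose proof (sz_cap p hp i t'); unfold h; apply Nat.div_le_lower_bound; lia).
      destruct (Nat.ltb_spec t' (t + 1 + K)).
      + destruct (Nat.ltb_spec t t'); [|lia]. simpl andb. cbv iota.
        assert (HA : 0 < 4 ^ (p * i)) by auto.
        eapply Rle_trans. apply (Fe_pos_bound i t' _ _ Hlt HA).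
        * rewrite <- pow_mult. rewrite Hd. rewrite mult_INR. unfold sp. rewrite INR4.
          replace (p * i * p)%nat with (p * p * i)%nat by lia.
          assert (1 <= INR (t' - t)) by (apply (le_INR 1); lia). assert (0 < 4 ^ (p * p * i)) by (apply pow_lt; lra). nra.
        * unfold a. unfold Rdiv. assert (0 <= b) by auto. apply Rle_trans with (2 ^ h * / 4 ^ (p * i)); [|lra].
          apply Rmult_le_compat_r; auto. left; apply Rinv_0_lt_compat; auto.
      + rewrite Bool.andb_false_r.
        assert (HA : 0 < 4 ^ (p * i) * 2 ^ i) by (apply Rmult_lt_0_compat; auto).
        eapply Rle_trans. apply (Fe_pos_bound i t' _ _ Hlt HA).
        * rewrite Rpow_mult_distr, <- !pow_mult. rewrite Hd. rewrite mult_INR. unfold sp. rewrite INR4.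
          replace (p * i * p)%nat with (p * p * i)%nat by lia.
          assert (INR K <= INR (t' - t)) by (apply le_INR; lia). unfold K in H1. rewrite INR2 in H1.
          replace (i * p)%nat with (p * i)%nat by lia.
          assert (0 < 4 ^ (p * p * i)) by (apply pow_lt; lra). nra.
        * unfold b. unfold Rdiv. rewrite Rplus_0_l. apply Rmult_le_compat_r; auto.
          left; apply Rinv_0_lt_compat; auto. }
  eapply Rle_trans. apply fs_le. intros t' Ht'. apply (Hpos t' Ht').
  rewrite fs_plus. rewrite fs_const.
  pose proof (fs_window t K a (nb p i) Ha).
  assert (INR K * a + INR (nb p i) * b <= 2 * 2 ^ h / 2 ^ i).
  { unfold K, a, b, nb. rewrite INR2, INR4.
    assert (2 ^ i <= 2 ^ (p * i)) by (apply Rle_pow; [lra|nia]).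
    assert (0 < 2 ^ (p * i)) by (apply pow_lt; lra).
    replace (4 ^ (p * i)) with (2 ^ (p * i) * 2 ^ (p * i)) by (rewrite <- Rpow_mult_distr; f_equal; lra).
    replace (2 ^ (p * i) * (2 ^ h * / (2 ^ (p * i) * 2 ^ (p * i))) + 2 ^ (p * i) * 2 ^ (p * i) * (2 ^ h * / (2 ^ (p * i) * 2 ^ (p * i) * 2 ^ i)))
      with (2 ^ h * / 2 ^ (p * i) + 2 ^ h / 2 ^ i) by (field; lra).
    assert (/ 2 ^ (p * i) <= / 2 ^ i) by (apply Rinv_le_contravar; lra).
    unfold Rdiv. nra. }
  lra.
Qed.
End Err.

Lemma fs_single i E N : 0 <= E -> fs (fun j => if (j =? i)%nat then E else 0) N <= E.
Proof.
  intros HE. assert (forall N, fs (fun j => if (j =? i)%nat then E else 0) N = if (i <? N)%nat then E else 0).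
  { intro n; induction n; simpl fs. auto. rewrite IHn.
    destruct (Nat.eqb_spec n i); destruct (Nat.ltb_spec i n); destruct (Nat.ltb_spec i (S n)); try lia; lra. }
  rewrite H. destruct (_ <? _)%nat; lra.
Qed.

Lemma st_ge p (hp : (1 <= p)%nat) N : (N <= st p N)%nat.
Proof. unfold st. assert (N < 4 ^ N)%nat by (apply Nat.pow_gt_lin_r; lia).
  assert (4 ^ N <= 4 ^ (cc p * N))%nat by (apply Nat.pow_le_mono_r; [lia| pose proof (cc_ge2 p hp); nia]). lia. Qed.

Lemma err_bound p (hp : (1 <= p)%nat) i t (ht : (t < nb p i)%nat) M :
  fs (fun j => (iterT (Bshift (weight p)) (bpos p i t) (xv p) j - tgt i t j) ^ 2) M
  <= 2 * 2 ^ (i / 2) / 2 ^ i + 2 / 2 ^ i.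
Proof.
  set (n := bpos p i t).
  set (F := Fe p i t).
  assert (HF : forall a b c, 0 <= F a b c) by (intros; apply (Fe_nonneg p hp i t ht)).
  assert (Hh : forall J, 0 <= hG p F J) by (intros; apply (hG_nonneg p hp i t ht); auto).
  eapply Rle_trans. apply fs_le. intros j _. apply (err_pointwise p hp i t ht j).
  fold n. fold F.
  eapply Rle_trans with (fs (hG p F) (n + M)).
  { rewrite fs_split. pose proof (fs_nonneg (hG p F) n Hh). lra. }
  eapply Rle_trans. apply (fs_mono (hG p F) (n + M) (st p (n + M))); auto. apply st_ge; auto.
  rewrite block_sum by auto.
  set (E1 := 2 * 2 ^ (i / 2) / 2 ^ i).
  assert (HE1 : 0 <= E1).
  { unfold E1. unfold Rdiv. apply Rmult_le_pos. apply Rmult_le_pos. lra. apply pow_le; lra. left; apply Rinv_0_lt_compat, pow_lt; lra. }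
  eapply Rle_trans with (fs (fun j => (if (j =? i)%nat then E1 else 0) + 2 * (if (i <? j)%nat then / 2 ^ j else 0)) (n + M)).
  - apply fs_le. intros i' _. destruct (Nat.lt_total i' i) as [Hlt | [Heq | Hgt]].
    + pose proof (BS_Fe_before p hp i t ht i' Hlt). unfold F.
      destruct (Nat.eqb_spec i' i); try lia. destruct (Nat.ltb_spec i i'); try lia. lra.
    + subst. pose proof (BS_Fe_same p hp i t ht). unfold F. rewrite Nat.eqb_refl.
      destruct (Nat.ltb_spec i i); try lia. fold E1 in H. lra.
    + pose proof (BS_Fe_after p hp i t ht i' Hgt). unfold F.
      destruct (Nat.eqb_spec i' i); try lia. destruct (Nat.ltb_spec i i'); try lia. unfold Rdiv in H. lra.
  - rewrite fs_plus, fs_scal. pose proof (fs_single i E1 (n + M) HE1). pose proof (geom_tail i (n + M)).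
    unfold Rdiv. lra.
Qed.

Lemma err_small K : exists I, forall i, (I <= i)%nat -> 2 * 2 ^ (i / 2) / 2 ^ i + 2 / 2 ^ i <= 4 / 2 ^ K.
Proof.
  exists (2 * K)%nat. intros i Hi.
  assert (K <= i - i / 2)%nat.
  { assert (i / 2 <= i / 2)%nat by lia. pose proof (Nat.div_mod_eq i 2). pose proof (Nat.mod_upper_bound i 2). lia. }
  assert (0 < 2 ^ (i / 2)) by (apply pow_lt; lra).
  assert (E : 2 ^ i = 2 ^ (i / 2) * 2 ^ (i - i / 2)).
  { rewrite <- pow_add; f_equal. pose proof (Nat.div_mod_eq i 2). pose proof (Nat.mod_upper_bound i 2). lia. }
  assert (2 ^ K <= 2 ^ (i - i / 2)) by (apply Rle_pow; [lra|lia]).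
  assert (2 ^ K <= 2 ^ i) by (apply Rle_pow; [lra|lia]).
  assert (0 < 2 ^ K) by (apply pow_lt; lra).
  assert (HE3: 2 * 2 ^ (i / 2) / 2 ^ i = 2 / 2 ^ (i - i / 2)) by (rewrite E; field; split; lra).
  rewrite HE3. unfold Rdiv.
  assert (/ 2 ^ (i - i / 2) <= / 2 ^ K) by (apply Rinv_le_contravar; lra).
  assert (/ 2 ^ i <= / 2 ^ K) by (apply Rinv_le_contravar; lra). lra.
Qed.

Lemma IZR_nat n : IZR (Z.of_nat n) = INR n.
Proof. rewrite INR_IZR_INZ; auto. Qed.

Lemma Rabs_le_between a b : Rabs a <= b -> - b <= a <= b.
Proof. intros. pose proof (Rle_abs a). pose proof (Rle_abs (- a)). rewrite Rabs_Ropp in H1. lra. Qed.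

Lemma round_digit (zk : R) (m : nat) : (1 <= m)%nat -> Rabs zk <= INR m - 1 ->
  exists d : nat, (d <= 2 * m * m)%nat /\ Rabs (zk - (INR d - INR (m * m)) / INR m) <= / INR m.
Proof.
  intros Hm Hz. assert (Hm0 : 1 <= INR m) by (apply (le_INR 1); auto).
  set (f := Int_part (zk * INR m)). destruct (base_Int_part (zk * INR m)) as [H1 H2]. fold f in H1, H2.
  assert (Hzm : Rabs (zk * INR m) <= INR m * INR m - INR m).
  { rewrite Rabs_mult, (Rabs_pos_eq (INR m)) by lra. nra. }
  apply Rabs_le_between in Hzm.
  assert (Hf1 : (- Z.of_nat (m * m) - 1 < f)%Z).
  { apply lt_IZR. rewrite minus_IZR, opp_IZR, IZR_nat, mult_INR. lra. }
  assert (Hf2 : (f <= Z.of_nat (m * m))%Z).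
  { apply le_IZR. rewrite IZR_nat, mult_INR. lra. }
  exists (Z.to_nat (f + Z.of_nat (m * m))). split. lia.
  rewrite INR_IZR_INZ, Z2Nat.id by lia. rewrite plus_IZR, IZR_nat.
  replace (IZR f + INR (m * m) - INR (m * m)) with (IZR f) by ring.
  replace (zk - IZR f / INR m) with ((zk * INR m - IZR f) / INR m) by (field; lra).
  unfold Rdiv. rewrite Rabs_mult, (Rabs_pos_eq (/ INR m)) by (left; apply Rinv_0_lt_compat; lra).
  rewrite Rabs_pos_eq by lra. rewrite <- (Rmult_1_l (/ INR m)) at 2. apply Rmult_le_compat_r.
  left; apply Rinv_0_lt_compat; lra. lra.
Qed.

Lemma target_dense (z : seqR) Lz (Hz : infinite_sum (fun k => z k ^ 2) Lz) d (Hd : 0 < d) :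
  exists m u, (1 <= m)%nat /\ forall M, fs (fun k => (z k - dec m u k) ^ 2) M <= d.
Proof.
  assert (Hz0 : forall k, 0 <= z k ^ 2) by (intros; apply pow2_ge_0).
  destruct (Hz (d / 2) ltac:(lra)) as [N HN].
  specialize (HN N (le_n N)). rewrite sum_f_R0_fs in HN. unfold Rdist in HN. apply Rabs_def2 in HN.
  set (K := S N) in *.
  assert (HLz : forall n, fs (fun k => z k ^ 2) n <= Lz) by (intros; apply sum_partial_le; auto).
  assert (Hzk : forall k, Rabs (z k) <= sqrt Lz).
  { intros k. apply abs_le_sqrt. specialize (HLz (S k)). cbn [fs] in HLz.
    pose proof (fs_nonneg (fun k => z k ^ 2) k Hz0). lra. }
  destruct (nat_above (sqrt Lz + 1 + 2 / d + INR K + 1)) as [m Hm].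
  pose proof (sqrt_pos Lz). assert (0 < 2 / d) by (apply Rdiv_lt_0_compat; lra). pose proof (pos_INR K).
  assert (Hm1 : (1 <= m)%nat) by (apply INR_lt; simpl; lra).
  assert (HmK : (K <= m)%nat) by (apply INR_le; lra).
  assert (Hm0 : 1 <= INR m) by (apply (le_INR 1); auto).
  assert (Hdig : forall k, exists dk : nat, (dk <= 2 * m * m)%nat /\ Rabs (z k - (INR dk - INR (m * m)) / INR m) <= / INR m).
  { intro k. apply round_digit; auto. specialize (Hzk k). lra. }
  destruct (choice _ Hdig) as [dd Hdd].
  set (d' := fun k => Nat.min (dd k) (2 * m * m)).
  exists m, (enc (Bm m) d' m). split; auto. intro M.
  assert (Hd' : forall j, (d' j < Bm m)%nat) by (intros; unfold d', Bm; lia).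
  eapply Rle_trans. apply (fs_mono _ M (m + M)). intros; apply pow2_ge_0. lia.
  rewrite fs_split.
  assert (P1 : fs (fun k => (z k - dec m (enc (Bm m) d' m) k) ^ 2) m <= d / 2).
  { eapply Rle_trans. apply (fs_le _ (fun _ => / INR m * / INR m)). intros k Hk.
    unfold dec. destruct (Nat.ltb_spec k m); [|lia].
    rewrite (enc_dig 1 (le_n 1) m d' m k Hd' Hk).
    destruct (Hdd k) as [Hk1 Hk2]. unfold d'. rewrite Nat.min_l by auto.
    rewrite <- RPow_abs_sq. assert (0 < / INR m) by (apply Rinv_0_lt_compat; lra).
    pose proof (Rabs_pos (z k - (INR (dd k) - INR (m * m)) / INR m)). simpl. nra.
    rewrite fs_const. replace (INR m * (/ INR m * / INR m)) with (/ INR m) by (field; lra).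
    assert (2 / d < INR m) by lra.
    assert (/ INR m < / (2 / d)) by (apply Rinv_lt_contravar; auto; nra).
    replace (/ (2 / d)) with (d / 2) in H3 by (field; lra). lra. }
  assert (P2 : fs (fun j => (z (m + j)%nat - dec m (enc (Bm m) d' m) (m + j)%nat) ^ 2) M <= d / 2).
  { rewrite (fs_ext _ (fun j => z (m + j)%nat ^ 2)).
    2:{ intros j _. unfold dec. destruct (Nat.ltb_spec (m + j) m); [lia|]. f_equal. ring. }
    pose proof (HLz (m + M)%nat). rewrite fs_split in H2.
    pose proof (fs_mono (fun k => z k ^ 2) K m Hz0 HmK). lra. }
  lra.
Qed.

Lemma count_mono A a b : (a <= b)%nat -> (count_upto A a <= count_upto A b)%nat.
Proof. intros H; induction H; auto. simpl. lia. Qed.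

Lemma count_last A b : A b -> (1 <= count_upto A b)%nat.
Proof. intros. destruct b; simpl; destruct (excluded_middle_informative _); try contradiction; lia. Qed.

Lemma count_step A a b : (a < b)%nat -> A b -> (count_upto A a + 1 <= count_upto A b)%nat.
Proof. intros H HA. destruct b; [lia|]. simpl. destruct (excluded_middle_informative (A (S b))); [|contradiction].
  pose proof (count_mono A a b ltac:(lia)). lia. Qed.

Lemma count_seq A (g : nat -> nat) W : (forall w, (w < S W)%nat -> A (g w)) -> (forall w, (g w < g (S w))%nat) ->
  (S W <= count_upto A (g W))%nat.
Proof.
  intros HA Hg. induction W.
  - apply count_last, HA; lia.
  - pose proof (count_step A (g W) (g (S W)) (Hg W) (HA (S W) ltac:(lia))).
    assert (S W <= count_upto A (g W))%nat by (apply IHW; intros; apply HA; lia). lia.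
Qed.

Section Assign.
Set Default Proof Using "All".
Variable p : nat.
Hypothesis hp : (1 <= p)%nat.

Definition tw (m u0 w : nat) : nat := (2 ^ m * (2 * u0 + 1) - 1 + 2 ^ (m + 1) * Bm m ^ m * w)%nat.

Lemma tw_S m u0 w : S (tw m u0 w) = (2 ^ m * (2 * (u0 + Bm m ^ m * w) + 1))%nat.
Proof. unfold tw. assert (1 <= 2 ^ m)%nat by (pose proof (Nat.pow_nonzero 2 m); lia).
  rewrite Nat.pow_add_r. simpl (2 ^ 1)%nat. nia. Qed.

Lemma tgt_tw i m u0 w k : (1 <= m)%nat -> (8 * m <= i)%nat -> tgt i (tw m u0 w) k = dec m u0 k.
Proof.
  intros Hm Hi.
  assert (E1 : nu (S (tw m u0 w)) = m) by (rewrite tw_S; apply (nu_eq p hp)).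
  assert (E2 : oddp (S (tw m u0 w)) = (u0 + Bm m ^ m * w)%nat).
  { unfold oddp. rewrite E1. rewrite tw_S. rewrite Nat.mul_comm, Nat.div_mul by (apply Nat.pow_nonzero; lia).
    replace (2 * (u0 + Bm m ^ m * w) + 1)%nat with (1 + (u0 + Bm m ^ m * w) * 2)%nat by lia.
    rewrite Nat.div_add by lia. simpl. lia. }
  unfold tgt, allowed. rewrite E1, E2.
  destruct (Nat.leb_spec 1 m); [|lia]. destruct (Nat.leb_spec (8 * m) i); [|lia]. simpl.
  unfold dec. destruct (Nat.ltb_spec k m); auto. rewrite (dig_period p hp); auto.
Qed.

Lemma tw_mono m u0 w : (tw m u0 w < tw m u0 (S w))%nat.
Proof. unfold tw. assert (1 <= 2 ^ (m + 1) * Bm m ^ m)%nat.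
  { pose proof (Nat.pow_nonzero 2 (m+1)). pose proof (Nat.pow_nonzero (Bm m) m). pose proof (Bm_pos p hp m). nia. }
  nia. Qed.

Lemma bpos_mono i a b : (a < b)%nat -> (bpos p i a < bpos p i b)%nat.
Proof. intros. unfold bpos. pose proof (sp_pos p hp i). nia. Qed.
End Assign.

Lemma sq_tri a b c : (a - c) ^ 2 <= 2 * (a - b) ^ 2 + 2 * (b - c) ^ 2.
Proof. pose proof (pow2_ge_0 ((a - b) - (b - c))). nra. Qed.

Lemma sqrt_lt_of l e : 0 < e -> l < e ^ 2 -> sqrt l < e.
Proof. intros He Hl. destruct (Rle_lt_dec 0 l).
  - pose proof (sqrt_sqrt l r). pose proof (sqrt_pos l). destruct (Rlt_le_dec (sqrt l) e); auto. nra.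
  - rewrite sqrt_neg_0 by lra. auto. Qed.

Lemma log_block p N : (1 <= p)%nat -> (1 <= N)%nat ->
  let i := (Nat.log2 N / (2 * p))%nat in (4 ^ (p * i) <= N /\ N < 4 ^ (p * S i))%nat.
Proof.
  intros Hp HN i. pose proof (Nat.log2_spec N HN) as [H1 H2].
  assert (Hc: (2 * p <> 0)%nat) by lia.
  pose proof (Nat.Div0.mul_div_le (Nat.log2 N) (2 * p)).
  pose proof (Nat.div_mod_eq (Nat.log2 N) (2 * p)). pose proof (Nat.mod_upper_bound (Nat.log2 N) (2*p) Hc).
  rewrite !(pow4 p Hp). fold i in H, H0. split.
  - eapply Nat.le_trans; [|apply H1]. apply Nat.pow_le_mono_r; lia.
  - eapply Nat.lt_le_trans; [apply H2|]. apply Nat.pow_le_mono_r. lia. nia.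
Qed.

Lemma log_block_ge p N J : (1 <= p)%nat -> (4 ^ (p * J) <= N)%nat -> (J <= Nat.log2 N / (2 * p))%nat.
Proof.
  intros Hp HN. apply Nat.div_le_lower_bound. lia. rewrite (pow4 p Hp) in HN.
  apply Nat.log2_le_pow2. pose proof (Nat.pow_nonzero 2 (2 * (p * J))). lia.
  replace (2 * p * J)%nat with (2 * (p * J))%nat by lia. auto.
Qed.

Theorem part2 p (hp : (1 <= p)%nat) q (Hq : (p + 1 <= q)%nat) : q_freq_hypercyclic_l2 q (Bshift (weight p)).
Proof.
  exists (xv p). split. apply xv_l2; auto.
  intros U HU [z [Hz HUz]].
  destruct (HU z Hz HUz) as [eps [Heps HUe]].
  destruct Hz as [Lz HLz].
  set (dl := eps ^ 2 / 8). assert (Hdl : 0 < dl) by (unfold dl; apply Rdiv_lt_0_compat; [apply pow_lt|]; lra).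
  destruct (target_dense z Lz HLz dl Hdl) as [m [u0 [Hm1 Hzy]]].
  destruct (nat_above (4 / dl)) as [K HK].
  assert (HK2 : 4 / 2 ^ K <= dl).
  { assert (INR K <= 2 ^ K). { rewrite <- INR2. apply le_INR. apply Nat.lt_le_incl, Nat.pow_gt_lin_r; lia. }
    assert (0 < 4 / dl) by (apply Rdiv_lt_0_compat; lra).
    assert (0 < 2 ^ K) by (apply pow_lt; lra).
    assert (4 / dl < 2 ^ K) by lra.
    apply Rmult_lt_compat_r with (r := dl) in H2; auto.
    replace (4 / dl * dl) with 4 in H2 by (field; lra).
    unfold Rdiv. apply Rmult_le_reg_r with (2 ^ K); auto. rewrite Rmult_assoc, Rinv_l by lra. lra. }
  destruct (err_small K) as [I0 HI0].
  assert (HLz0 : forall n, fs (fun k => z k ^ 2) n <= Lz) by (intros; apply sum_partial_le; auto; intros; apply pow2_ge_0).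
  assert (Good : forall j w, (I0 <= j)%nat -> (8 * m <= j)%nat -> (tw m u0 w < nb p j)%nat ->
     U (iterT (Bshift (weight p)) (bpos p j (tw m u0 w)) (xv p))).
  { intros j w Hj1 Hj2 Ht.
    set (v := iterT (Bshift (weight p)) (bpos p j (tw m u0 w)) (xv p)).
    assert (Hyv : forall M, fs (fun k => (v k - dec m u0 k) ^ 2) M <= dl).
    { intro M. rewrite (fs_ext _ (fun k => (v k - tgt j (tw m u0 w) k) ^ 2)).
      2:{ intros k _. rewrite (tgt_tw p hp j m u0 w k); auto. }
      eapply Rle_trans. apply err_bound; auto. eapply Rle_trans. apply HI0; auto. auto. }
    apply HUe.
    - destruct (sum_exists (fun k => v k ^ 2) (2 * dl + 4 * Lz + 4 * dl)) as [l [Hl _]].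
      intros; apply pow2_ge_0.
      2: exists l; auto.
      intro M. eapply Rle_trans. apply (fs_le _ (fun k => 2 * (v k - dec m u0 k) ^ 2 + 4 * z k ^ 2 + 4 * (z k - dec m u0 k) ^ 2)).
      { intros k _. pose proof (sq_tri (v k) (dec m u0 k) 0). pose proof (sq_tri 0 (z k) (dec m u0 k)).
        replace (v k - 0) with (v k) in H by ring. replace (0 - z k) with (- z k) in H0 by ring.
        replace ((- z k) ^ 2) with (z k ^ 2) in H0 by ring. replace ((dec m u0 k - 0) ^ 2) with ((0 - dec m u0 k) ^ 2) in H by ring.
        lra. }
      rewrite !fs_plus, !fs_scal. specialize (Hyv M). specialize (HLz0 M). specialize (Hzy M). lra.
    - destruct (sum_exists (fun k => (z k - v k) ^ 2) (4 * dl)) as [l [Hl Hl2]].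
      intros; apply pow2_ge_0.
      { intro M. eapply Rle_trans. apply (fs_le _ (fun k => 2 * (z k - dec m u0 k) ^ 2 + 2 * (v k - dec m u0 k) ^ 2)).
        intros k _. pose proof (sq_tri (z k) (dec m u0 k) (v k)). replace ((dec m u0 k - v k) ^ 2) with ((v k - dec m u0 k) ^ 2) in H by ring. lra.
        rewrite fs_plus, !fs_scal. specialize (Hyv M). specialize (Hzy M). lra. }
      exists l. split; auto. apply sqrt_lt_of; auto. unfold dl in Hl2. assert (0 < eps ^ 2) by (apply pow_lt; lra). lra. }
  set (Q := (2 ^ (m + 1) * Bm m ^ m)%nat). set (a0 := (2 ^ m * (2 * u0 + 1))%nat).
  assert (HQ : (1 <= Q)%nat).
  { unfold Q. pose proof (Nat.pow_nonzero 2 (m+1)). pose proof (Nat.pow_nonzero (Bm m) m). pose proof (Bm_pos p hp m). nia. }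
  assert (Ha0 : (1 <= a0)%nat) by (unfold a0; pose proof (Nat.pow_nonzero 2 m); nia).
  set (J1 := (I0 + 8 * m + 2 * a0 + 4 * Q)%nat).
  exists (/ (4 * INR Q * 4 ^ (2 * p))). split.
  { apply Rinv_0_lt_compat. assert (1 <= INR Q) by (apply (le_INR 1); auto). assert (0 < 4 ^ (2 * p)) by (apply pow_lt; lra). nra. }
  exists (4 ^ (p * (J1 + 1)))%nat. intros N HN HN1.
  set (A := fun n => U (iterT (Bshift (weight p)) n (xv p))).
  destruct (log_block p N hp HN1) as [Hb1 Hb2].
  set (i := (Nat.log2 N / (2 * p))%nat) in *.
  assert (Hi : (J1 + 1 <= i)%nat) by (apply log_block_ge; auto).
  set (j := (i - 1)%nat).
  assert (Hnbj : (j <= nb p j)%nat) by (unfold nb; assert (j < 4 ^ j)%nat by (apply Nat.pow_gt_lin_r; lia);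
     assert (4 ^ j <= 4 ^ (p * j))%nat by (apply Nat.pow_le_mono_r; nia); lia).
  set (W := (nb p j / (2 * Q))%nat).
  assert (HW1 : (1 <= W)%nat) by (apply Nat.div_le_lower_bound; lia).
  assert (HW2 : (2 * Q * W <= nb p j)%nat) by apply Nat.Div0.mul_div_le.
  assert (HW3 : (nb p j < 2 * Q * (W + 1))%nat).
  { pose proof (Nat.div_mod_eq (nb p j) (2 * Q)). pose proof (Nat.mod_upper_bound (nb p j) (2*Q) ltac:(lia)). fold W in H. nia. }
  set (g := fun w => bpos p j (tw m u0 w)).
  assert (Htw : forall w, (w < W)%nat -> (tw m u0 w < nb p j)%nat).
  { intros w Hw. unfold tw. fold a0. fold Q. nia. }
  assert (Hcnt : (W <= count_upto A (g (W - 1)))%nat).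
  { replace W with (S (W - 1)) at 1 by lia. apply count_seq.
    - intros w Hw. unfold A, g. apply Good; try lia. apply Htw. lia.
    - intros w. unfold g. apply bpos_mono; auto. apply (tw_mono p hp). }
  assert (Hg : (g (W - 1) <= N ^ q)%nat).
  { unfold g. assert (tw m u0 (W - 1) < nb p j)%nat by (apply Htw; lia).
    pose proof (pos_lt_next p hp j _ H). pose proof (st_grow p hp j). pose proof (sp_pos p hp j).
    replace (S j) with i in H1 by lia.
    assert (Est : st p i = (nb p i ^ (p + 1))%nat) by (unfold st, nb, cc; rewrite <- Nat.pow_mul_r; f_equal; lia).
    assert (nb p i ^ (p + 1) <= N ^ (p + 1))%nat by (apply Nat.pow_le_mono_l; unfold nb; auto).
    assert (N ^ (p + 1) <= N ^ q)%nat by (apply Nat.pow_le_mono_r; lia). lia. }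
  pose proof (count_mono A _ _ Hg) as Hc.
  assert (HWr : INR (nb p j) / (4 * INR Q) <= INR W).
  { apply lt_INR in HW3. rewrite mult_INR, mult_INR, plus_INR in HW3. simpl in HW3.
    assert (4 * Q <= nb p j)%nat by lia. apply le_INR in H. rewrite mult_INR in H. simpl in H.
    assert (1 <= INR Q) by (apply (le_INR 1); auto).
    unfold Rdiv. apply Rmult_le_reg_r with (4 * INR Q). lra. rewrite Rmult_assoc, Rinv_l by lra. nra. }
  assert (HNr : INR N <= 4 ^ (2 * p) * INR (nb p j)).
  { apply lt_INR in Hb2. rewrite INR4 in Hb2. unfold nb. rewrite INR4.
    replace (p * S i)%nat with (2 * p + p * j)%nat in Hb2 by (unfold j; nia). rewrite pow_add in Hb2. lra. }
  assert (Hcr : INR W <= INR (count_upto A (N ^ q))) by (apply le_INR; lia).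
  assert (HN0 : 0 < INR N) by (apply lt_0_INR; lia).
  assert (Hnb0 : 0 < INR (nb p j)) by (apply lt_0_INR; pose proof (nb_pos p hp j); lia).
  assert (1 <= INR Q) by (apply (le_INR 1); auto). assert (0 < 4 ^ (2 * p)) by (apply pow_lt; lra).
  unfold Rdiv. apply Rmult_le_reg_r with (INR N); auto. replace (INR (count_upto A (N ^ q)) * / INR N * INR N) with (INR (count_upto A (N ^ q))) by (field; lra).
  apply Rle_trans with (/ (4 * INR Q * 4 ^ (2 * p)) * (4 ^ (2 * p) * INR (nb p j))).
  apply Rmult_le_compat_l; auto. left; apply Rinv_0_lt_compat; nra.
  replace (/ (4 * INR Q * 4 ^ (2 * p)) * (4 ^ (2 * p) * INR (nb p j))) with (INR (nb p j) / (4 * INR Q)) by (field; lra).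
  lra.
Qed.

Theorem mainTheorem7 (p : nat) (hp : (1 <= p)%nat) :
  ~ q_freq_hypercyclic_l2 p (Bshift (weight p)) /\
  (forall q : nat, (p + 1 <= q)%nat -> q_freq_hypercyclic_l2 q (Bshift (weight p))).
Proof.
  split.
  - apply part1; auto.
  - intros q Hq. apply part2; auto.
Qed.
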